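(* Let $1\le k<n$ and let $C_k=[c_{ij}]_{i,j=1}^k$ be the upper-left $k\times k$ submatrix of an incomplete $n\times n$ pairwise comparison matrix. For $i=1,\dots,k$ let $s_i$ be the number of missing entries in the $i$-th row of $C_k$, $s_{\mathrm{MAX}}=\max_i s_i$, $s_{\mathrm{MIN}}=\min_i s_i$. Let $D_k=[d_{ij}]$ with $d_{ij}=c_{ij}$ if $c_{ij}$ is known and $d_{ij}=0$ if $c_{ij}=?$, and let $A_k$ be the $k\times k$ matrix with diagonal entries $1$ and off-diagonal entries $(A_k)_{ij}=-\frac{d_{ij}}{n-s_i-1}$. If $k=1$, or if $1<k<n$ and $$\overline{\mathit{CI}}(C_k)<\frac{n-k-s_{\mathrm{MAX}}+s_{\mathrm{MIN}}}{k-1},$$ then $A_k$ is invertible, so the system $A_kw=b$ has a unique solution for every $b\in\mathbb{R}^k$.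
   Context: An incomplete pairwise comparison matrix has entries either positive reals or unknown ($c_{ij}=c_{ji}=?$), with known entries satisfying $c_{ii}=1$, $c_{ij}=1/c_{ji}$. Harker's consistency index of a $k\times k$ incomplete pairwise comparison matrix $M$ ($k\ge2$) is $\overline{\mathit{CI}}(M)=\frac{\rho(H)-k}{k-1}$, where $\rho$ is the spectral radius and $H=[h_{ij}]$ has $h_{ii}=1+s_i$ ($s_i$ = number of missing entries in row $i$ of $M$), $h_{ij}=0$ if $m_{ij}=?$, and $h_{ij}=m_{ij}$ otherwise. In the arithmetic incomplete HRE method the unknown weights of $a_1,\dots,a_k$ solve $A_kw=b$ with $b_i=\frac{1}{n-s_i-1}\sum_{j=k+1}^n c_{ij}w(a_j)$ (here all comparisons between $a_1,\dots,a_k$ and the reference alternatives are taken to be known, so that $s_i$ counts the missing entries of row $i$). *)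

(* Defs.v *)
From HB Require Import structures.
From mathcomp Require Import all_boot all_order all_algebra.
From mathcomp Require Import complex.
From mathcomp Require Import classical_sets reals.
Set Implicit Arguments. Unset Strict Implicit. Unset Printing Implicit Defensive.
Import Order.TTheory GRing.Theory Num.Theory.
Local Open Scope ring_scope.
Local Open Scope classical_set_scope.

Section Defs.
Variable R : realType.

(* An incomplete pairwise comparison matrix: entry [Some x] = known, [None] = "?". *)
Definition incomplete_pcm (n : nat) (C : 'M[option R]_n) : Prop :=
  (forall i, C i i = Some 1) /\
  (forall i j, C i j = None <-> C j i = None) /\
  (forall i j x, C i j = Some x -> 0 < x /\ C j i = Some x^-1).

Definition nmiss (k : nat) (C : 'M[option R]_k) (i : 'I_k) : nat :=
  #|[set j : 'I_k | C i j == None]|.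

Definition ulsub (n k : nat) (Hkn : (k <= n)%N) (C : 'M[option R]_n) : 'M[option R]_k :=
  \matrix_(i < k, j < k) C (widen_ord Hkn i) (widen_ord Hkn j).

Definition dmx (k : nat) (C : 'M[option R]_k) : 'M[R]_k :=
  \matrix_(i, j) odflt 0 (C i j).

Definition harkerH (k : nat) (C : 'M[option R]_k) : 'M[R]_k :=
  \matrix_(i, j) if i == j then 1 + (nmiss C i)%:R else odflt 0 (C i j).

Definition spectral_radius (k : nat) (A : 'M[R]_k) : R :=
  sup [set r : R | exists z : R[i],
         root (char_poly (map_mx (fun x : R => x%:C%C) A)) z /\ r%:C%C = `|z|].

Definition harkerCI (k : nat) (C : 'M[option R]_k) : R :=
  (spectral_radius (harkerH C) - k%:R) / (k%:R - 1).

Definition HRE_A (n k : nat) (C : 'M[option R]_k) : 'M[R]_k :=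
  \matrix_(i, j) if i == j then 1
                 else - dmx C i j / (n%:R - (nmiss C i)%:R - 1).

(* s_MAX and s_MIN (for k >= 1; every s_i <= k - 1 < k, so the idx k is harmless) *)
Definition smax (k : nat) (C : 'M[option R]_k) : nat := \max_(i < k) nmiss C i.
Definition smin (k : nat) (C : 'M[option R]_k) : nat := \big[minn/k]_(i < k) nmiss C i.

End Defs.

(* Main.v *)
Require Import Defs.
From HB Require Import structures.
From mathcomp Require Import all_boot all_order all_algebra.
From mathcomp Require Import complex.
From mathcomp Require Import classical_sets reals.
Import Order.TTheory GRing.Theory Num.Theory.
Local Open Scope ring_scope.
From mathcomp Require Import lra ring zify.

Lemma nmiss_lt (R : realType) k (C : 'M[option R]_k) i :
  C i i = Some 1 -> (nmiss C i < k)%N.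
Proof.
move=> Cii; rewrite /nmiss.
have -> : #|[set j | C i j == None]%classic| = #|[set j | C i j == None]|.
  apply: eq_card => j; rewrite inE; apply/idP/idP => [/set_mem //|h].
  exact: mem_set.
have sub : [set j | C i j == None] \subset [set~ i].
  apply/fintype.subsetP=> j; rewrite !inE; by apply: contraTN => /eqP ->; rewrite Cii.
have := subset_leq_card sub; rewrite cardsC1 card_ord.
move=> h; apply: (leq_ltn_trans h); rewrite ltn_predL; exact: (leq_ltn_trans (leq0n i) (ltn_ord i)).
Qed.

Lemma spec_ge (R : realType) k (A : 'M[R]_k) (x : R) :
  \det (x%:M - A) = 0 -> `|x| <= spectral_radius A.
Proof.
move=> hdet.
rewrite /spectral_radius (_ : map_mx _ A = map_mx (real_complex R) A) //.
have hroot : root (char_poly (map_mx (real_complex R) A)) x%:C%C.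
  rewrite -map_char_poly; apply: rmorph_root.
  rewrite -eigenvalue_root_char; apply/eigenvalueP.
  have /det0P [v vn0 hv] : \det (x%:M - A) == 0 by rewrite hdet.
  exists v => //; move/eqP: hv; rewrite mulmxBr subr_eq0 => /eqP <-.
  by rewrite mul_mx_scalar.
have [rs hrs] := closed_field_poly_normal (char_poly (map_mx (real_complex R) A)).
have inrs : forall z, root (char_poly (map_mx (real_complex R) A)) z -> z \in rs.
  move=> z; rewrite hrs (monicP (char_poly_monic _)) scale1r.
  by rewrite root_prod_XsubC.
apply: sup_upper_bound; last first.
  exists x%:C%C; split => //.
  by rewrite normc_def /= expr0n /= addr0 sqrtr_sqr.
split; first by exists `|x|; exists x%:C%C; split => //; rewrite normc_def /= expr0n /= addr0 sqrtr_sqr.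
exists (\sum_(z <- rs) Num.sqrt ((complex.Re z)^+2 + (complex.Im z)^+2)).
move=> r [z [hz hr]].
move: hr; rewrite normc_def => /complexI ->.
have zin := inrs z hz.
rewrite (big_rem z zin) /= lerDl sumr_ge0 // => y _; exact: sqrtr_ge0.
Qed.

Lemma min_le_max k (F : 'I_k -> nat) : (0 < k)%N ->
  (\big[minn/k]_(i < k) F i <= \max_(i < k) F i)%N.
Proof.
case: k F => // k F _; rewrite big_ord_recl.
apply: leq_trans (geq_minl _ _) _; exact: leq_bigmax.
Qed.

Theorem mainTheorem6 (R : realType) (n k : nat) (Hk1 : (1 <= k)%N) (Hkn : (k < n)%N)
    (C : 'M[option R]_n) :
  incomplete_pcm C ->
  let Ck := ulsub (ltnW Hkn) C in
  (k = 1%N \/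
   ((1 < k)%N /\
    harkerCI Ck < (n%:R - k%:R - (smax Ck)%:R + (smin Ck)%:R) / (k%:R - 1))) ->
  HRE_A n Ck \in unitmx /\
  (forall b : 'cV[R]_k, exists! w : 'cV[R]_k, HRE_A n Ck *m w = b).
Proof.
move=> pcm Ck hyp.
have Ckii : forall i, Ck i i = Some 1.
  by move=> i; rewrite /Ck /ulsub mxE; exact: pcm.1.
have dnz : forall i, (n%:R - (nmiss Ck i)%:R - 1 : R) != 0.
  move=> i; have h : ((nmiss Ck i).+1 < n)%N.
    exact: leq_ltn_trans (@nmiss_lt R k Ck i (Ckii i)) Hkn.
  move: h; rewrite -(ltr_nat R) -natr1 => h.
  rewrite subr_eq0 subr_eq; apply/negP => /eqP h2.
  by rewrite h2 addrC ltxx in h.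
have Aeq : HRE_A n Ck = diag_mx (\row_i (n%:R - (nmiss Ck i)%:R - 1)^-1)
                          *m (n%:R%:M - harkerH Ck).
  rewrite mul_diag_mx; apply/matrixP => i j; rewrite !mxE.
  case: eqP => [->|ne].
    rewrite mulr1n (addrC 1) opprD addrA mulVf //.
  by rewrite /= mulr0n sub0r mulrC.
have Aunit : HRE_A n Ck \in unitmx.
  case: hyp => [k1 | [k1 h]].
    have -> : HRE_A n Ck = 1%:M.
      apply/matrixP => i j; rewrite !mxE.
      have -> : i = j by apply: val_inj => /=; have := ltn_ord i; have := ltn_ord j; lia.
      by rewrite eqxx.
    exact: unitmx1.
  rewrite Aeq unitmx_mul; apply/andP; split.
    rewrite unitmxE det_diag unitfE; apply/prodf_neq0 => i _.
    by rewrite mxE invr_eq0 dnz.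
  rewrite unitmxE unitfE; apply/eqP => hdet.
  have := @spec_ge R k _ _ hdet; rewrite normr_nat => hge.
  have hmm : ((smin Ck)%:R <= (smax Ck)%:R :> R).
    by rewrite ler_nat; apply: min_le_max.
  have dpos : (0 : R) < k%:R - 1.
    by rewrite subr_gt0 (_ : 1 = 1%:R) // ltr_nat.
  move: h; rewrite /harkerCI ltr_pM2r ?invr_gt0 // => h.
  have h3 : spectral_radius (harkerH Ck) - k%:R < n%:R - k%:R.
    apply: (lt_le_trans h); by rewrite -addrA gerDl addrC subr_le0.
  by rewrite ltrD2r ltNge hge in h3.
split => // b; exists (invmx (HRE_A n Ck) *m b); split.
  by rewrite mulmxA mulmxV // mul1mx.
by move=> w hw; rewrite -hw mulmxA mulVmx // mul1mx.
Qed.
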